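(* Let $n\ge3$ and define $c\in\mathbb{Z}_{\ge0}^n$ by $c_k=n-1$ for $k\le n-3$ and $c_k=1$ for $k\in\{n-2,n-1,n\}$. Then $c\in\mathrm{StoRec}_n\setminus\mathrm{PSR}_n(n-3)$.
   Context: $K_n^0$ is the complete graph on vertex set $\{0,1,\dots,n\}$ with sink $0$; every vertex has degree $n$. A configuration is $c\in\mathbb{Z}_{\ge0}^n$, stable if $c_i\le n-1$ for all $i$; $c^{\max}=(n-1,\dots,n-1)$. A deterministic toppling of an unstable vertex $i$ sends one grain to each neighbour (grains sent to the sink disappear). A stochastic toppling (parameter $p\in(0,1)$) of an unstable vertex $i$ sends, independently for each incident edge, one grain along it with probability $p$, else keeps it. For $k\in\{0,\dots,n\}$, the $k$-partial SSM on $K_n^0$ is the model in which vertices $1,\dots,k$ topple stochastically and vertices $k+1,\dots,n$ topple deterministically; its Markov chain on stable configurations adds a grain at vertex $i$ with probability $\mu_i>0$ and then stabilises. $\mathrm{PSR}_n(k)$ is its set of recurrent states; equivalently, the stable configurations reachable from $c^{\max}$ by a finite sequence of grain additions and topplings of unstable vertices in which vertices $k+1,\dots,n$ topple deterministically and vertices $1,\dots,k$ send one grain along each edge of an arbitrary subset of their incident edges. $\mathrm{StoRec}_n=\mathrm{PSR}_n(n)$ is the set of recurrent states of the SSM (all vertices topple stochastically). *)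

(* Defs.v *)
From Stdlib Require Import Relations.Relation_Operators.
From mathcomp Require Import all_boot.
Set Implicit Arguments. Unset Strict Implicit. Unset Printing Implicit Defensive.

(* K_n^0 : vertex set {0,...,n}, sink 0.  Non-sink vertex v in {1..n} is
   represented by the ordinal (v-1) : 'I_n.  A configuration assigns a
   number of grains to each non-sink vertex. *)
Definition config (n : nat) := 'I_n -> nat.

Definition stable n (c : config n) : Prop := forall i, c i <= n.-1.

Definition cmax n : config n := fun _ => n.-1.
Arguments cmax n : clear implicits.

Definition add_grain n (c c' : config n) : Prop :=
  exists i : 'I_n, forall j, c' j = c j + (j == i).

(* deterministic toppling of unstable vertex i (degree n): one grain to each
   of the n-1 other non-sink vertices, one grain to the sink (lost) *)
Definition topple_det n (i : 'I_n) (c c' : config n) : Prop :=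
  n <= c i /\ forall j, c' j = if j == i then c i - n else c j + 1.

(* stochastic-style toppling of unstable vertex i: one grain along each edge
   of an arbitrary subset of its incident edges; A = set of non-sink
   neighbours receiving a grain, b = whether the edge to the sink is used *)
Definition topple_sto n (i : 'I_n) (c c' : config n) : Prop :=
  n <= c i /\ exists (A : {set 'I_n}) (b : bool), i \notin A /\
    forall j, c' j = if j == i then c i - (#|A| + b) else c j + (j \in A).

(* one step of the k-partial SSM: vertices 1..k (ordinals < k) topple
   stochastically, vertices k+1..n deterministically *)
Definition psr_step n (k : nat) (c c' : config n) : Prop :=
  add_grain c c' \/
  exists i : 'I_n, if i < k then topple_sto i c c' else topple_det i c c'.

Definition PSR (n k : nat) (c : config n) : Prop :=
  stable c /\ @clos_refl_trans (config n) (@psr_step n k) (cmax n) c.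
Arguments PSR n k c : clear implicits.

Definition StoRec (n : nat) (c : config n) : Prop := PSR n n c.
Arguments StoRec n c : clear implicits.

(* the configuration of Proposition 5.3: c_v = n-1 for v <= n-3, and c_v = 1
   for v in {n-2,n-1,n}; vertex v = ordinal v-1 *)
Definition c53 (n : nat) : config n := fun k => if k < n - 3 then n.-1 else 1.
Arguments c53 n : clear implicits.

(* Main.v *)
Require Import Defs.
From mathcomp Require Import all_boot.
From Stdlib Require Import Relations.Relation_Operators FunctionalExtensionality PeanoNat.
From mathcomp Require Import zify.
Set Implicit Arguments. Unset Strict Implicit. Unset Printing Implicit Defensive.

Notation RT n k := (@clos_refl_trans (config n) (@psr_step n k)).

Lemma st_add n k (c : config n) (i : 'I_n) : RT n k c (fun j => c j + (j == i)).
Proof. apply: rt_step; left; by exists i. Qed.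

Lemma st_sto n k (c : config n) (i : 'I_n) (A : {set 'I_n}) (b : bool) :
  i < k -> n <= c i -> i \notin A ->
  RT n k c (fun j => if j == i then c i - (#|A| + b) else c j + (j \in A)).
Proof.
move=> ik ci iA; apply: rt_step; right; exists i; rewrite ik; split=> //.
by exists A, b.
Qed.

Lemma lower_seq n k (s : seq 'I_n) (c : config n) : uniq s ->
  (forall i, i \in s -> i < k /\ c i = n) ->
  RT n k c (fun j => if j \in s then n.-1 else c j).
Proof.
elim: s c => [|i s IH] c /=.
  move=> _ _. have -> : (fun j => if j \in [::] then n.-1 else c j) = c by [].
  exact: rt_refl.
case/andP=> nis us H.
have [ik ci] := H i (mem_head _ _).
pose c1 := (fun j => if j == i then c i - (#|@set0 ('I_n)| + true) else c j + (j \in @set0 ('I_n))).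
apply: (@rt_trans _ _ _ c1).
  apply: (@st_sto n k c i set0 true) => //; first by rewrite ci.
  by rewrite in_set0.
have E : (fun j => if j \in i :: s then n.-1 else c j) =
         (fun j => if j \in s then n.-1 else c1 j).
  apply: functional_extensionality => j; rewrite /c1 in_cons /= cards0 in_set0 addn0 add0n.
  case: (eqVneq j i) => [->|ji] /=; first by rewrite (negbTE nis) ci subn1.
  by case: (j \in s).
rewrite E; apply: IH => // j js; have [jk cj] := H j (mem_behead (s:=i::s) js).
split=> //; rewrite /c1; case: eqP => [ji|]; last by rewrite in_set0 addn0.
by move: nis; rewrite -ji js.
Qed.

Lemma lowerB m k (c : config m.+3) : m <= k ->
  (forall j : 'I_m.+3, j < m -> c j = m.+3) ->
  RT m.+3 k c (fun j => if j < m then m.+2 else c j).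
Proof.
move=> mk H.
have := @lower_seq m.+3 k (filter (fun j : 'I_m.+3 => j < m) (enum 'I_m.+3)) c.
rewrite filter_uniq ?enum_uniq //.
have E : (fun j => if j \in (filter (fun j : 'I_m.+3 => j < m) (enum 'I_m.+3)) then (m.+3).-1 else c j)
  = (fun j => if j < m then m.+2 else c j).
  by apply: functional_extensionality => j; rewrite mem_filter mem_enum andbT.
rewrite E; apply=> // i; rewrite mem_filter mem_enum andbT => im.
split; [lia | exact: H].
Qed.

Definition sx m : 'I_m.+3 := inord m.
Definition sy m : 'I_m.+3 := inord m.+1.
Definition sz m : 'I_m.+3 := inord m.+2.

Lemma eq_sx m (j : 'I_m.+3) : (j == sx m) = (nat_of_ord j == m).
Proof. apply/eqP/eqP => [->|h]; first by rewrite /sx /sy /sz /= inordK //; lia. by apply: val_inj; rewrite /sx /sy /sz /= inordK ?h //; lia. Qed.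
Lemma eq_sy m (j : 'I_m.+3) : (j == sy m) = (nat_of_ord j == m.+1).
Proof. apply/eqP/eqP => [->|h]; first by rewrite /sx /sy /sz /= inordK //; lia. by apply: val_inj; rewrite /sx /sy /sz /= inordK ?h //; lia. Qed.
Lemma eq_sz m (j : 'I_m.+3) : (j == sz m) = (nat_of_ord j == m.+2).
Proof. apply/eqP/eqP => [->|h]; first by rewrite /sx /sy /sz /= inordK //; lia. by apply: val_inj; rewrite /sx /sy /sz /= inordK ?h //; lia. Qed.
Lemma v_sx m : nat_of_ord (sx m) = m. Proof. rewrite /sx /sy /sz /= inordK //; lia. Qed.
Lemma v_sy m : nat_of_ord (sy m) = m.+1. Proof. rewrite /sx /sy /sz /= inordK //; lia. Qed.
Lemma v_sz m : nat_of_ord (sz m) = m.+2. Proof. rewrite /sx /sy /sz /= inordK //; lia. Qed.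

Lemma rt_eq n k (c d d' : config n) : RT n k c d -> d = d' -> RT n k c d'.
Proof. by move=> H <-. Qed.

Ltac solve_pt := rewrite /= ?eq_sx ?eq_sy ?eq_sz ?v_sx ?v_sy ?v_sz /=;
  repeat (case: ifP => ?); lia.

Ltac solve_eq := apply: functional_extensionality => j;
  rewrite /= ?in_setD1 ?in_setT ?in_set0 ?eq_sx ?eq_sy ?eq_sz ?v_sx ?v_sy ?v_sz /=;
  have := ltn_ord j;
  repeat (case: ifP => ?); lia.

Lemma card1 m (x : 'I_m.+3) : #|[set: 'I_m.+3] :\ x| = m.+2.
Proof. have := cardsD1 x [set: 'I_m.+3]; rewrite cardsT card_ord in_setT /=. move: #|_ :\ x| => X. lia. Qed.
Lemma card2 m (a b : 'I_m.+3) : a != b -> #|[set: 'I_m.+3] :\ a :\ b| = m.+1.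
Proof.
move=> ab; have := cardsD1 b ([set: 'I_m.+3] :\ a); rewrite in_setD1 in_setT eq_sym ab.
have := @card1 m a. move: #|_ :\ a| => X. move: #|_ :\ b| => Y. lia.
Qed.

Lemma part1 m : StoRec m.+3 (c53 m.+3).
Proof.
split.
  by move=> j; rewrite /c53; case: ifP.
pose d1 : config m.+3 := fun j => m.+2 + (j == sx m).
pose d2 : config m.+3 := fun j => if j == sx m then 0 else m.+3.
pose d3 : config m.+3 := fun j => if j == sx m then 0 else if j < m then m.+2 else m.+3.
pose d4 : config m.+3 := fun j => if j == sx m then 0 else if j == sy m then 1
   else if j < m then m.+3 else m.+4.
pose d5 : config m.+3 := fun j => if j == sx m then 0 else if j == sy m then 1 else m.+3.
pose d6 : config m.+3 := fun j => if j == sx m then 0 else if j == sy m then 1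
   else if j < m then m.+2 else m.+3.
pose d7 : config m.+3 := fun j => if j < m then m.+3 else 1.
have ymx : sy m != sx m by rewrite eq_sx v_sy; lia.
have zmy : sz m != sy m by rewrite eq_sy v_sz; lia.
have xmy : sx m != sy m by rewrite eq_sy v_sx; lia.
apply: (@rt_trans _ _ _ d1).
  by apply: (rt_eq (st_add _ _ (sx m))); rewrite /d1 /cmax; solve_eq.
apply: (@rt_trans _ _ _ d2).
  apply: (rt_eq (@st_sto _ _ d1 (sx m) ([set: 'I_m.+3] :\ sx m) true _ _ _)).
  - by [].
  - rewrite /d1 eqxx; lia.
  - by rewrite in_setD1 eqxx.
  rewrite card1 /d1 /d2. solve_eq.
apply: (@rt_trans _ _ _ d3).
  apply: (rt_eq (lowerB (c:=d2) _ _)).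
  - lia.
  - move=> j jm; rewrite /d2 eq_sx. case: ifP => //; lia.
  rewrite /d2 /d3; solve_eq.
apply: (@rt_trans _ _ _ d4).
  apply: (rt_eq (@st_sto _ _ d3 (sy m) ([set: 'I_m.+3] :\ sx m :\ sy m) true _ _ _)).
  - by [].
  - rewrite /d3; solve_pt.
  - by rewrite in_setD1 eqxx.
  rewrite card2 // /d3 /d4. solve_eq.
apply: (@rt_trans _ _ _ d5).
  apply: (rt_eq (@st_sto _ _ d4 (sz m) set0 true _ _ _)).
  - by [].
  - rewrite /d4; solve_pt.
  - by rewrite in_set0.
  rewrite cards0 /d4 /d5. solve_eq.
apply: (@rt_trans _ _ _ d6).
  apply: (rt_eq (lowerB (c:=d5) _ _)).
  - lia.
  - move=> j jm; rewrite /d5; solve_pt.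
  rewrite /d5 /d6; solve_eq.
apply: (@rt_trans _ _ _ d7).
  apply: (rt_eq (@st_sto _ _ d6 (sz m) ([set: 'I_m.+3] :\ sz m :\ sy m) true _ _ _)).
  - by [].
  - rewrite /d6; solve_pt.
  - rewrite !in_setD1 eqxx; lia.
  rewrite card2 // /d6 /d7. solve_eq.
apply: (rt_eq (lowerB (c:=d7) _ _)).
- lia.
- by move=> j jm; rewrite /d7 jm.
rewrite /d7 /c53; solve_eq.
Qed.

Definition Inv m (c : config m.+3) : Prop :=
  (exists u v : 'I_m.+3, [/\ m <= u, m <= v, nat_of_ord u != v, 0 < c u & 0 < c v])
  /\ (exists w : 'I_m.+3, m <= w /\ 1 < c w).

Lemma inv_mono m (c c' : config m.+3) :
  (forall j : 'I_m.+3, m <= j -> c j <= c' j) -> Inv c -> Inv c'.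
Proof.
move=> H [[u [v [mu mv uv cu cv]]] [w [mw cw]]]; split.
  exists u, v; split=> //.
  - exact: leq_trans cu (H u mu).
  - exact: leq_trans cv (H v mv).
exists w; split=> //; exact: leq_trans cw (H w mw).
Qed.

Lemma third m (a b : 'I_m.+3) :
  exists s : 'I_m.+3, [/\ m <= s, nat_of_ord s != a & nat_of_ord s != b].
Proof.
have [t [ht h1 h2]] : exists t, [/\ t < 3, m + t <> a & m + t <> b].
  destruct (Nat.eq_dec m a), (Nat.eq_dec m b), (Nat.eq_dec (m+1) a),
    (Nat.eq_dec (m+1) b);
  first [exists 0; split; lia | exists 1; split; lia | exists 2; split; lia].
have hs : m + t < m.+3 by lia.
exists (Ordinal hs) => /=; split; [lia | apply/eqP | apply/eqP] => //.
Qed.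

Lemma inv_det m (c c' : config m.+3) (i r : 'I_m.+3) :
  (forall j, c' j = if j == i then c i - m.+3 else c j + 1) ->
  m <= r -> nat_of_ord r != i -> 0 < c r -> Inv c'.
Proof.
move=> H mr ri cr.
have [s [ms si sr]] := third i r.
have ri' : (r == i) = false by exact: negbTE ri.
have si' : (s == i) = false by exact: negbTE si.
split.
  exists r, s; split=> //.
  - by rewrite eq_sym.
  - by rewrite H ri' addn1.
  - by rewrite H si' addn1.
exists r; split=> //; rewrite H ri'; lia.
Qed.

Lemma inv_step m (c c' : config m.+3) : psr_step m c c' -> Inv c -> Inv c'.
Proof.
case=> [[i H]|[i]].
  by apply: inv_mono => j _; rewrite H leq_addr.
case: ifP => im.
  move=> [_ [A [b [_ H]]]]; apply: inv_mono => j mj; rewrite H.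
  case: (eqVneq j i) => [E|_]; last exact: leq_addr.
  by move: mj; rewrite E; lia.
move=> [ci H] [[u [v [mu mv uv cu cv]]] _].
case: (eqVneq (nat_of_ord u) i) => [E|ui].
  apply: (inv_det H mv) cv; by rewrite -E eq_sym.
exact: (inv_det H mu ui cu).
Qed.

Lemma inv_rt m (c c' : config m.+3) : RT m.+3 m c c' -> Inv c -> Inv c'.
Proof.
elim=> [x y st|x|x y z _ IH1 _ IH2] //.
  exact: inv_step.
by move=> /IH1 /IH2.
Qed.

Lemma part2 m : ~ PSR m.+3 (m.+3 - 3) (c53 m.+3).
Proof.
move=> [_ R].
have E : m.+3 - 3 = m by lia.
rewrite E in R.
have I0 : Inv (cmax m.+3).
  split; last by exists (sx m); rewrite v_sx /cmax; split; lia.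
  by exists (sx m), (sy m); rewrite v_sx v_sy /cmax; split; lia.
have [_ [w [mw]]] := inv_rt R I0.
rewrite /c53; case: ifP; lia.
Qed.

Theorem proposition5p3 (n : nat) (hn : 3 <= n) :
  StoRec n (c53 n) /\ ~ PSR n (n - 3) (c53 n).
Proof.
case: n hn => [|[|[|m]]] // _.
split; [exact: part1 | exact: part2].
Qed.
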